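(* Let $n\ge 1$ be an integer. The game value of \textsc{Snort} played on the star $K_{1,n}$ whose centre is tinted blue (and whose leaves are untinted) is $\{\, n \mid * \,\}$ if $n$ is even, and $\{\, n \mid 0 \,\}$ if $n$ is odd.
   Context: \textsc{Snort} is a two-player normal-play combinatorial game (the player unable to move loses) between Left (blue) and Right (red), played on a finite simple graph in which each vertex may be tinted blue, tinted red, or untinted. Left may move on any vertex not tinted red; Right may move on any vertex not tinted blue. A move on vertex $v$ deletes $v$ and tints all neighbours of $v$ in the mover's colour; any vertex that thereby becomes tinted in both colours is deleted. (This is equivalent to the original game in which players alternately colour vertices and may not colour a vertex adjacent to an opponent-coloured vertex.) Game values are in the standard sense of combinatorial game theory: $\{A \mid B\}$ denotes the game with Left options $A$ and Right options $B$, $0=\{\,\mid\,\}$, $*=\{0\mid 0\}$, and equality is the usual equality of games. $K_{1,n}$ is the star with one centre vertex adjacent to $n$ leaves. *)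

(* Defs.v *)
From mathcomp Require Import all_boot.
Set Implicit Arguments. Unset Strict Implicit. Unset Printing Implicit Defensive.

Inductive game : Type := Game of seq game & seq game.

Definition leftopts (G : game) : seq game := let: Game L _ := G in L.
Definition rightopts (G : game) : seq game := let: Game _ R := G in R.

(** [le_pair G H] = (G <= H, H <= G), with the standard recursive definition
    G <= H  iff  no Left option G^L satisfies H <= G^L and
                 no Right option H^R satisfies H^R <= G. *)
Fixpoint le_pair (G : game) : game -> bool * bool :=
  let: Game GL GR := G in
  fix leH (H : game) : bool * bool :=
    let: Game HL HR := H in
    (
      all (fun gl => ~~ (le_pair gl (Game HL HR)).2) GL
      && all (fun hr => ~~ (leH hr).2) HR,
      all (fun hl => ~~ (leH hl).1) HL
      && all (fun gr => ~~ (le_pair gr (Game HL HR)).1) GR ).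

Definition game_le (G H : game) : bool := (le_pair G H).1.

Definition game_eq (G H : game) : Prop := game_le G H /\ game_le H G.

Definition zero_game : game := Game [::] [::].
Definition star_game : game := Game [:: zero_game] [:: zero_game].
Fixpoint nat_game (n : nat) : game :=
  if n is m.+1 then Game [:: nat_game m] [::] else zero_game.

Inductive tint := Untinted | BlueT | RedT.
Definition tint_eqb (a b : tint) : bool :=
  match a, b with
  | Untinted, Untinted | BlueT, BlueT | RedT, RedT => true
  | _, _ => false
  end.

Inductive player := LeftP | RightP.
Definition own_tint (p : player) : tint := if p is LeftP then BlueT else RedT.
Definition opp_tint (p : player) : tint := if p is LeftP then RedT else BlueT.

(** A position on a graph with (symmetric, irreflexive) adjacency [e : rel nat]:
    the list [V] of remaining vertices and a tinting [c]. *)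

Definition legal (p : player) (c : nat -> tint) (v : nat) : bool :=
  ~~ tint_eqb (c v) (opp_tint p).

(** Moving on [v]: delete [v], tint its neighbours in the mover's colour,
    deleting those neighbours that were tinted in the opponent's colour
    (they become tinted in both colours). *)
Definition move (e : rel nat) (p : player) (V : seq nat) (c : nat -> tint)
    (v : nat) : seq nat * (nat -> tint) :=
  ( [seq u <- V | (u != v) && ~~ (e v u && tint_eqb (c u) (opp_tint p))],
    fun u => if e v u then own_tint p else c u ).

(** Game tree of Snort, with fuel (each move deletes at least one vertex). *)
Fixpoint snort_aux (k : nat) (e : rel nat) (V : seq nat) (c : nat -> tint)
    : game :=
  if k is k'.+1 then
    Game
      [seq let m := move e LeftP V c v in snort_aux k' e m.1 m.2
         | v <- V & legal LeftP c v]
      [seq let m := move e RightP V c v in snort_aux k' e m.1 m.2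
         | v <- V & legal RightP c v]
  else zero_game.

Definition snort (e : rel nat) (V : seq nat) (c : nat -> tint) : game :=
  snort_aux (size V) e V c.

(** The star K_{1,n}: vertices 0..n, centre 0, leaves 1..n. *)
Definition star_verts (n : nat) : seq nat := iota 0 n.+1.
Definition star_rel : rel nat :=
  fun u v => ((u == 0) && (v != 0)) || ((v == 0) && (u != 0)).
Definition star_blue_centre : nat -> tint :=
  fun u => if u == 0 then BlueT else Untinted.

(* Main.v *)
Require Import Defs.
From mathcomp Require Import all_boot zify.

Fixpoint gsize (G : game) : nat :=
  let: Game L R := G in (sumn (map gsize L) + sumn (map gsize R)).+1.

Fixpoint memg (x : game) (l : seq game) : Prop :=
  if l is y :: l' then y = x \/ memg x l' else False.

Lemma allmP (p : pred game) l : all p l <-> (forall x, memg x l -> p x).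
Proof.
elim: l => [|y l IH] /=; first by split.
split.
- by move/andP=> [py /IH H] x [<-|/H].
- move=> H; apply/andP; split; first by apply: H; left.
  by apply/IH => x hx; apply: H; right.
Qed.

Lemma memg_size x l : memg x l -> gsize x <= sumn (map gsize l).
Proof.
elim: l => [|y l IH] //= [<-|/IH h]; first exact: leq_addr.
by rewrite (leq_trans h) // leq_addl.
Qed.

Lemma memgL x L R : memg x L -> gsize x < gsize (Game L R).
Proof. by move/memg_size=> h /=; rewrite ltnS (leq_trans h) // leq_addr. Qed.
Lemma memgR x L R : memg x R -> gsize x < gsize (Game L R).
Proof. by move/memg_size=> h /=; rewrite ltnS (leq_trans h) // leq_addl. Qed.

Lemma lp_eq GL GR HL HR : le_pair (Game GL GR) (Game HL HR) =
  (all (fun gl => ~~ (le_pair gl (Game HL HR)).2) GL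
   && all (fun hr => ~~ (le_pair (Game GL GR) hr).2) HR,
   all (fun hl => ~~ (le_pair (Game GL GR) hl).1) HL
   && all (fun gr => ~~ (le_pair gr (Game HL HR)).1) GR).
Proof. by []. Qed.

Lemma eq_allm (p q : pred game) l :
  (forall x, memg x l -> p x = q x) -> all p l = all q l.
Proof.
elim: l => [|y l IH] //= H.
by rewrite H; [rewrite IH // => x hx; apply: H; right | left].
Qed.

Lemma lp_swap_n n A B : gsize A + gsize B < n -> (le_pair A B).2 = game_le B A.
Proof.
elim: n A B => [//|n IH] [AL AR] [BL BR] hs.
rewrite /game_le !lp_eq /=.
congr (_ && _); apply: eq_allm => x hx; congr negb.
- rewrite IH //; have := @memgL x BL BR hx; lia.
- idtac.
change ((le_pair x (Game BL BR)).1 = (le_pair (Game BL BR) x).2); rewrite IH //; have := @memgR x AL AR hx; lia.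
Qed.

Lemma lp_swap A B : (le_pair A B).2 = game_le B A.
Proof. exact: (@lp_swap_n (gsize A + gsize B).+1). Qed.

Lemma le_unfold GL GR HL HR : game_le (Game GL GR) (Game HL HR) =
  all (fun gl => ~~ game_le (Game HL HR) gl) GL
  && all (fun hr => ~~ game_le hr (Game GL GR)) HR.
Proof.
rewrite {1}/game_le lp_eq.
by congr (_ && _); apply: eq_allm => x _; rewrite lp_swap.
Qed.

Lemma gle_refl G : game_le G G.
Proof.
move: {2}(gsize G).+1 (ltnSn (gsize G)) => n.
elim: n G => [//|n IH] [L R] hs.
rewrite le_unfold; apply/andP; split; apply/allmP => -[xL xR] hx; rewrite le_unfold;
  apply/negP => /andP [h1 h2].
- move/allmP: h1 => /(_ _ hx); rewrite IH //.
  by have := @memgL (Game xL xR) L R hx; lia.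
- move/allmP: h2 => /(_ _ hx); rewrite IH //.
  by have := @memgR (Game xL xR) L R hx; lia.
Qed.

Lemma le_trans_n n A B C : gsize A + gsize B + gsize C < n ->
  game_le A B -> game_le B C -> game_le A C.
Proof.
elim: n A B C => [//|n IH] [AL AR] [BL BR] [CL CR] hs.
rewrite !le_unfold => /andP [hA1 hA2] /andP [hB1 hB2].
apply/andP; split; apply/allmP => x hx; apply/negP => hc.
- move/allmP: hA1 => /(_ x hx) /negP; apply.
  apply: (IH _ (Game CL CR)) => //; last by rewrite le_unfold hB1 hB2.
  by have := @memgL x AL AR hx; lia.
- move/allmP: hB2 => /(_ x hx) /negP; apply.
  apply: (IH _ (Game AL AR)) => //; last by rewrite le_unfold hA1 hA2.
  by have := @memgR x CL CR hx; lia.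
Qed.

Lemma gle_trans {A B C} : game_le A B -> game_le B C -> game_le A C.
Proof. exact: (@le_trans_n (gsize A + gsize B + gsize C).+1). Qed.

Lemma sim_le GL GR HL HR :
  (forall gl, memg gl GL -> exists2 hl, memg hl HL & game_le gl hl) ->
  (forall hr, memg hr HR -> exists2 gr, memg gr GR & game_le gr hr) ->
  game_le (Game GL GR) (Game HL HR).
Proof.
move=> h1 h2; rewrite le_unfold; apply/andP; split; apply/allmP => x hx;
  apply/negP => hc.
- have [[yL yR] hy hxy] := h1 x hx; case: x hx hc hxy => xL xR hx hc hxy.
  have := gle_trans hc hxy; rewrite le_unfold => /andP [/allmP/(_ _ hy)].
  by rewrite gle_refl.
- have [[yL yR] hy hxy] := h2 x hx; case: x hx hc hxy => xL xR hx hc hxy.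
  have := gle_trans hxy hc; rewrite le_unfold => /andP [_ /allmP/(_ _ hy)].
  by rewrite gle_refl.
Qed.
Fixpoint Tg m := if m is m'.+1 then Game (nseq m (Tg m')) [::] else Game [::] [::].
Fixpoint Ug m := if m is m'.+1 then Game (nseq m (Ug m')) (nseq m (Ug m')) else Game [::] [::].
Fixpoint Sg m := if m is m'.+1 then Game (Tg m :: nseq m (Sg m')) (nseq m (Ug m'))
  else Game [:: Tg 0] [::].

Lemma snort_S k e V c : snort_aux k.+1 e V c =
  Game [seq snort_aux k e (move e LeftP V c v).1 (move e LeftP V c v).2 | v <- V & legal LeftP c v]
       [seq snort_aux k e (move e RightP V c v).1 (move e RightP V c v).2 | v <- V & legal RightP c v].
Proof. by []. Qed.

Lemma map_const (T : Type) (X : game) (s : seq T) : map (fun _ => X) s = nseq (size s) X.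
Proof. by elim: s => //= x s ->. Qed.

Lemma filter_none (T : Type) (a : pred T) s : (forall x, a x = false) -> filter a s = [::].
Proof. by move=> h; elim: s => //= x s ->; rewrite h. Qed.

Lemma star_rel_nz u v : u != 0 -> v != 0 -> star_rel u v = false.
Proof. by rewrite /star_rel => /negbTE -> /negbTE ->. Qed.

Lemma filter_rm (P : pred nat) v L : v \in L -> uniq L -> 
  (forall u, u \in L -> u != v -> P u) ->
  size [seq u <- L | (u != v) && P u] = (size L).-1.
Proof.
move=> vL uL h.
rewrite -(size_rem vL) rem_filter //; congr size; apply: eq_in_filter => u uL'.
by rewrite /=; case: eqP => //= /eqP; apply: h.
Qed.

Lemma map_in_const (f : nat -> game) X s : (forall v, v \in s -> f v = X) -> map f s = nseq (size s) X.
Proof. by elim: s => //= x s IH h; rewrite h ?mem_head // IH // => y ys; apply: h; rewrite inE ys orbT. Qed.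

Lemma filter_none_in (a : pred nat) s : (forall x, x \in s -> a x = false) -> filter a s = [::].
Proof. by elim: s => //= x s IH h; rewrite h ?mem_head // IH // => y ys; apply: h; rewrite inE ys orbT. Qed.

Lemma filter_all_in (a : pred nat) s : (forall x, x \in s -> a x) -> filter a s = s.
Proof. by move=> h; apply/all_filterP/allP. Qed.

Lemma isoB k L c : size L <= k -> uniq L -> 0 \notin L ->
  (forall u, u \in L -> c u = BlueT) -> snort_aux k star_rel L c = Tg (size L).
Proof.
elim: k L c => [|k IH] L c.
  by case: L.
move=> hs uL nz hc; rewrite snort_S.
rewrite (@filter_none_in (fun v => legal RightP c v)); last by move=> x /hc; rewrite /legal => ->.
rewrite filter_all_in; last by move=> x /hc; rewrite /legal => ->.
have vnz : forall v, v \in L -> v != 0 by move=> v vL; apply: contraNneq nz => v0; rewrite -v0.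
rewrite (@map_in_const _ (Tg (size L).-1) L); last first.
  move=> v vL /=.
  have e1 : size [seq u <- L | (u != v) && ~~ (star_rel v u && tint_eqb (c u) RedT)] = (size L).-1.
    by apply: filter_rm => // u uL' _; rewrite star_rel_nz ?vnz.
  rewrite IH ?e1 //.
  - by case: (size L) hs => //= ?; rewrite ltnS.
  - exact: filter_uniq.
  - by rewrite mem_filter negb_and nz orbT.
  - by move=> u; rewrite mem_filter => /andP [_ uL']; case: ifP => // _; apply: hc.
by case: L {hs uL nz hc vnz}.
Qed.

Lemma isoU k L c : size L <= k -> uniq L -> 0 \notin L ->
  (forall u, u \in L -> c u = Untinted) -> snort_aux k star_rel L c = Ug (size L).
Proof.
elim: k L c => [|k IH] L c.
  by case: L.
move=> hs uL nz hc; rewrite snort_S.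
rewrite !filter_all_in; try by move=> x /hc; rewrite /legal => ->.
have vnz : forall v, v \in L -> v != 0 by move=> v vL; apply: contraNneq nz => v0; rewrite -v0.
rewrite (@map_in_const _ (Ug (size L).-1) L); last first.
  move=> v vL /=.
  have e1 : size [seq u <- L | (u != v) && ~~ (star_rel v u && tint_eqb (c u) RedT)] = (size L).-1.
    by apply: filter_rm => // u uL' _; rewrite star_rel_nz ?vnz.
  rewrite IH ?e1 //.
  - by case: (size L) hs => //= ?; rewrite ltnS.
  - exact: filter_uniq.
  - by rewrite mem_filter negb_and nz orbT.
  - move=> u; rewrite mem_filter => /andP [_ uL']; rewrite star_rel_nz ?vnz //; exact: hc.
rewrite (@map_in_const _ (Ug (size L).-1) L); last first.
  move=> v vL /=.
  have e1 : size [seq u <- L | (u != v) && ~~ (star_rel v u && tint_eqb (c u) BlueT)] = (size L).-1.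
    by apply: filter_rm => // u uL' _; rewrite star_rel_nz ?vnz.
  rewrite IH ?e1 //.
  - by case: (size L) hs => //= ?; rewrite ltnS.
  - exact: filter_uniq.
  - by rewrite mem_filter negb_and nz orbT.
  - move=> u; rewrite mem_filter => /andP [_ uL']; rewrite star_rel_nz ?vnz //; exact: hc.
by case: L {hs uL nz hc vnz}.
Qed.

Lemma starS k L c : (size L).+1 <= k -> uniq L -> 0 \notin L -> c 0 = BlueT ->
  (forall u, u \in L -> c u = Untinted) -> snort_aux k star_rel (0 :: L) c = Sg (size L).
Proof.
elim: k L c => [|k IH] L c //.
move=> hs uL nz hc0 hc; rewrite snort_S.
have vnz : forall v, v \in L -> v != 0 by move=> v vL; apply: contraNneq nz => v0; rewrite -v0.
have -> : [seq v <- 0 :: L | legal LeftP c v] = 0 :: L.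
  by apply: filter_all_in => x; rewrite inE => /orP [/eqP ->|/hc]; rewrite /legal ?hc0 // => ->.
have -> : [seq v <- 0 :: L | legal RightP c v] = L.
  by rewrite /= {1}/legal hc0 /=; apply: filter_all_in => x /hc; rewrite /legal => ->.
rewrite (@map_in_const _ (Ug (size L).-1) L); last first.
  move=> v vL.
  have e1 : (move star_rel RightP (0 :: L) c v).1 = [seq u <- L | (u != v) && ~~ (star_rel v u && tint_eqb (c u) BlueT)].
    have sv0 : star_rel v 0 by rewrite /star_rel eqxx vnz // orbT.
    by rewrite /move /= sv0 hc0 /= andbF.
  have e2 : size (move star_rel RightP (0 :: L) c v).1 = (size L).-1.
    by rewrite e1; apply: filter_rm => // u uL' _; rewrite star_rel_nz ?vnz.
  rewrite isoU ?e2 //.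
  - by case: (size L) hs => //= ?; rewrite ltnS => /ltnW.
  - by rewrite e1; exact: filter_uniq.
  - by rewrite e1 mem_filter negb_and nz orbT.
  - move=> u; rewrite e1 mem_filter => /andP [_ uL'] /=; rewrite star_rel_nz ?vnz //; exact: hc.
have -> : forall f : nat -> game, map f (0 :: L) = f 0 :: map f L by [].
rewrite (@map_in_const _ (Sg (size L).-1) L); last first.
  move=> v vL.
  have sv0 : star_rel v 0 by rewrite /star_rel eqxx vnz // orbT.
  have e1 : (move star_rel LeftP (0 :: L) c v).1 = 0 :: [seq u <- L | (u != v) && ~~ (star_rel v u && tint_eqb (c u) RedT)].
    by rewrite /move /= sv0 hc0 /= eq_sym vnz.
  have e2 : size [seq u <- L | (u != v) && ~~ (star_rel v u && tint_eqb (c u) RedT)] = (size L).-1.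
    by apply: filter_rm => // u uL' _; rewrite star_rel_nz ?vnz.
  rewrite e1 IH ?e2 //.
  - have : 0 < size L by case: (L) vL.
    lia.
  - exact: filter_uniq.
  - by rewrite mem_filter negb_and nz orbT.
  - by rewrite /= sv0.
  - move=> u; rewrite mem_filter => /andP [_ uL'] /=; rewrite star_rel_nz ?vnz //; exact: hc.
have e0 : (move star_rel LeftP (0 :: L) c 0).1 = L.
  rewrite /move /=; apply: filter_all_in => u uL'.
  by rewrite vnz //= hc // andbF.
rewrite isoB ?e0 //; last first.
  move=> u uL' /=; have -> // : star_rel 0 u by rewrite /star_rel eqxx vnz.
by case: L {hs uL nz hc vnz e0}.
Qed.

Lemma memg_nseq x k y : memg x (nseq k y) -> x = y.
Proof. by elim: k => //= k IH [->|/IH]. Qed.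

Lemma T_eq m : game_le (Tg m) (nat_game m) /\ game_le (nat_game m) (Tg m).
Proof.
elim: m => [|m [IH1 IH2]]; first by split; apply: gle_refl.
split; apply: sim_le => //.
- by move=> gl /memg_nseq ->; exists (nat_game m) => //; left.
- by move=> gl [<-|//]; exists (Tg m) => //; left.
Qed.

Lemma U_eq m : game_le (Ug m) (if odd m then star_game else zero_game) /\
               game_le (if odd m then star_game else zero_game) (Ug m).
Proof.
elim: m => [|m [IH1 IH2]]; first by split; apply: gle_refl.
rewrite [odd _]/=; case: (odd m) IH1 IH2 => /= IH1 IH2.
- have W1 : game_le (Game [:: star_game] [:: star_game]) zero_game by [].
  have W2 : game_le zero_game (Game [:: star_game] [:: star_game]) by [].
  split.
  + apply: gle_trans W1; apply: sim_le.
    * by move=> gl /(@memg_nseq _ m.+1) ->; exists star_game => //; left.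
    * by move=> hr [<-|//]; exists (Ug m) => //; left.
  + apply: gle_trans W2 _; apply: sim_le.
    * by move=> gl [<-|//]; exists (Ug m) => //; left.
    * by move=> hr /(@memg_nseq _ m.+1) ->; exists star_game => //; left.
- split; apply: sim_le.
  + by move=> gl /(@memg_nseq _ m.+1) ->; exists zero_game => //; left.
  + by move=> hr [<-|//]; exists (Ug m) => //; left.
  + by move=> gl [<-|//]; exists (Ug m) => //; left.
  + by move=> hr /(@memg_nseq _ m.+1) ->; exists zero_game => //; left.
Qed.

Lemma S_le m : game_le (Sg m) (nat_game m.+1).
Proof.
elim: m => [|m IH].
  by apply: sim_le => // gl [<-|//]; exists (nat_game 0); [left | apply: gle_refl].
apply: sim_le => // gl [<-|/(@memg_nseq _ m.+1) ->]; exists (nat_game m.+1); try by left.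
- exact: (T_eq m.+1).1.
- exact: IH.
Qed.

Theorem lemma2 (n : nat) :
  1 <= n ->
  game_eq (snort star_rel (star_verts n) star_blue_centre)
          (Game [:: nat_game n] [:: if odd n then zero_game else star_game]).
Proof.
case: n => [//|m] _.
have -> : snort star_rel (star_verts m.+1) star_blue_centre = Sg m.+1.
  rewrite /snort /star_verts (_ : iota 0 m.+2 = 0 :: iota 1 m.+1) //.
  rewrite -[m.+1 in RHS](size_iota 1 m.+1); apply: starS.
  - by [].
  - exact: iota_uniq.
  - by rewrite mem_iota.
  - by [].
  - by move=> u; rewrite mem_iota /star_blue_centre => /andP [h _]; case: u h.
have [U1 U2] := U_eq m.
have X1 : game_le (Ug m) (if odd m.+1 then zero_game else star_game)
  by rewrite /=; case: (odd m) U1.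
have X2 : game_le (if odd m.+1 then zero_game else star_game) (Ug m)
  by rewrite /=; case: (odd m) U2.
split; apply: sim_le.
- move=> gl [<-|/(@memg_nseq _ m.+1) ->]; exists (nat_game m.+1); try by left.
  + exact: (T_eq m.+1).1.
  + exact: S_le.
- by move=> hr [<-|//]; exists (Ug m) => //; left.
- by move=> gl [<-|//]; exists (Tg m.+1); [left | exact: (T_eq m.+1).2].
- by move=> hr /(@memg_nseq _ m.+1) ->; exists (if odd m.+1 then zero_game else star_game) => //; left.
Qed.
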